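(* Let $\rho$ be an involution of $\Lambda_{K3}=II_{3,19}$ with eigenlattices $S=\Lambda_{K3}^{+}$ (hyperbolic, $2$-elementary) and $T=\Lambda_{K3}^{-}$, and let $e\in T$ be primitive isotropic. Put $\Lambda_{ias}=e^\perp/e\cong II_{2,18}$ (perp taken in $\Lambda_{K3}$), with the induced involution $\rho_{ias}$ and eigenlattices $\Lambda_{ias}^{\pm}$, so that $\Lambda_{ias}^-=\bar T:=(e^\perp\cap T)/e$. Then the projection $e^\perp\to\Lambda_{ias}$ embeds $S$ into $\Lambda_{ias}^+$, and: if $e$ has divisibility $1$ in $T$, then $S=\Lambda_{ias}^+$; if $e$ has divisibility $2$ in $T$, then $S$ is a sublattice of index $2$ in $\Lambda_{ias}^+$ containing $(1+\rho_{ias})\Lambda_{ias}=2(\Lambda_{ias}^+)^*$.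
   Context: A lattice $H$ is $2$-elementary if $H^*/H\cong(\mathbb{Z}/2)^a$. The divisibility of $e\in T$ is the positive generator of $e\cdot T$. $II_{p,q}$ denotes the even unimodular lattice of signature $(p,q)$. *)

(* Defs.v *)
(* Lattices are Z^n ('rV[int]_n) with an integral Gram matrix. *)
From mathcomp Require Import all_boot all_order all_algebra.
Set Implicit Arguments. Unset Strict Implicit. Unset Printing Implicit Defensive.
Import Order.TTheory GRing.Theory Num.Theory.
Local Open Scope ring_scope.

Definition nK3 : nat := 22.

Section Lattices.
Variable n : nat.
Implicit Types (B rho : 'M[int]_n) (x y e : 'rV[int]_n).

Definition bil B x y : int := (x *m B *m y^T) 0 0.

Definition to_rat_mx (m k : nat) (M : 'M[int]_(m, k)) : 'M[rat]_(m, k) :=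
  map_mx (fun z : int => z%:~R) M.

(* signature (p,q) of a symmetric rational/integral Gram matrix G of size r:
   G is congruent over Q to a diagonal matrix with p positive and q negative
   diagonal entries (well defined by Sylvester's law of inertia). *)
Definition has_signature (r : nat) (G : 'M[int]_r) (p q : nat) : Prop :=
  exists P : 'M[rat]_r, P \in unitmx /\
    let D := P *m to_rat_mx G *m P^T in
    is_diag_mx D /\ #|[set i | 0 < D i i]| = p /\ #|[set i | D i i < 0]| = q.

(* B is the Gram matrix of an even unimodular lattice of signature (p,q),
   i.e. (Z^n, B) is isometric to II_{p,q} *)
Definition even_unimodular_lattice B (p q : nat) : Prop :=
  B^T = B /\ (forall x, (2 %| bil B x x)%Z) /\ `|\det B| = 1 /\
  has_signature B p q.

(* rho is an involutive isometry of (Z^n, B) (acting on row vectors x |-> x rho) *)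
Definition lattice_involution B rho : Prop :=
  rho *m rho = 1%:M /\ rho *m B *m rho^T = B.

Definition eig_plus rho x : bool := x *m rho == x.
Definition eig_minus rho x : bool := x *m rho == - x.

Definition primitive x : Prop :=
  x != 0 /\ forall (k : int) (y : 'rV[int]_n), x = k *: y -> `|k| = 1.

Definition isotropic B x : Prop := bil B x x = 0.

(* divisibility of e in the sublattice T = eig_minus rho:
   d is the positive generator of the ideal e.T *)
Definition divisibility_in_minus B rho e (d : int) : Prop :=
  0 < d /\ (forall t, eig_minus rho t -> (d %| bil B e t)%Z) /\
  exists2 t, eig_minus rho t & bil B e t = d.

Definition eperp B e x : bool := bil B x e == 0.

(* equality in Lambda_ias = e^perp / Z e of the classes of x, y in e^perp *)
Definition eq_mod_e e x y : Prop := exists k : int, x - y = k *: e.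

(* equality in Lambda_ias (x) Q of the classes of x/m and y (x, y in e^perp,
   m > 0): m^-1 x - y lies in Q e *)
Definition eq_mod_Qe e (m : int) x y : Prop :=
  exists2 c : int, c != 0 & exists a : int, c *: (x - m *: y) = a *: e.

(* x in e^perp represents an element of Lambda_ias^+ , the (+1)-eigenlattice
   of the induced involution rho_ias : [x] |-> [x rho] *)
Definition ias_plus rho e x : Prop := eq_mod_e e (x *m rho) x.

Definition sublattice_basis (P : pred 'rV[int]_n) (r : nat) (M : 'M[int]_(r, n)) : Prop :=
  (forall i, P (row i M)) /\ (forall x, P x -> exists c : 'rV[int]_r, x = c *m M) /\
  row_free (to_rat_mx M).

Definition hyperbolic_sublattice B (P : pred 'rV[int]_n) : Prop :=
  exists r (M : 'M[int]_(r.+1, n)),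
    sublattice_basis P M /\ has_signature (M *m B *m M^T) 1 r.

End Lattices.

(* Main.v *)
Require Import Defs.
From mathcomp Require Import all_boot all_order all_algebra zify ring.
Set Implicit Arguments. Unset Strict Implicit. Unset Printing Implicit Defensive.
Import Order.TTheory GRing.Theory Num.Theory.
Local Open Scope ring_scope.
Lemma dvd_small (N x : int) : N != 0 -> (N * (2 * x) %| x)%Z -> x = 0.
Proof.
move=> N0; rewrite dvdzE !abszM => H; apply/eqP; apply: contraLR H => x0.
have hx : (0 < `|x|)%N by rewrite absz_gt0.
have hN : (0 < `|N|)%N by rewrite absz_gt0.
have -> : `|2%:Z|%N = 2%N by []. apply/negP => /(dvdn_leq hx) => h. move: h hN hx; set a := `|N|%N; set b := `|x|%N. clearbody a b; nia.
Qed.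

Lemma colE0 p (A : 'M[int]_(1,p)) j : (A *m delta_mx j (0:'I_1)) 0 0 = A 0 j.
Proof. by rewrite -colE mxE. Qed.

Lemma zsolve n p (M : 'M[int]_(n,p)) (b : 'rV[int]_p) (N : int) : N != 0 ->
 (forall (c : 'cV[int]_p) (q : int) (ci : 'cV[int]_n), q != 0 -> M *m c = q *: ci ->
    (N * q %| (b *m c) 0%R 0%R)%Z) ->
 exists x : 'rV[int]_n, N *: (x *m M) = b.
Proof.
move=> N0 H.
have [L uL [R uR [d _ defM]]] := int_Smith_normal_form M.
set D := \matrix_(i,j) _ in defM.
set b' := b *m invmx R.
have zero (c : 'cV[int]_p) : M *m c = 0 -> (b *m c) 0 0 = 0.
  move=> Mc; apply: (dvd_small N0); case: (eqVneq ((b *m c) 0 0) 0) => [->|x0].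
    by rewrite dvdz0.
  apply: (H c _ 0); first by rewrite mulf_neq0.
  by rewrite Mc scaler0.
have Mcj j : M *m (invmx R *m delta_mx j (0:'I_1)) = L *m (D *m delta_mx j (0:'I_1)).
  by rewrite defM -!mulmxA (mulmxA R) mulmxV // mul1mx.
have bcj j : (b *m (invmx R *m delta_mx j (0:'I_1))) 0 0 = b' 0 j.
  by rewrite mulmxA colE0.
have hd (j : 'I_p) (i : 'I_n) : (i == j :> nat) -> (N * d`_i %| b' 0%R j)%Z.
  move=> ij.
  have Dd : D *m delta_mx j (0:'I_1) = d`_i *: delta_mx i (0:'I_1).
    apply/matrixP => k l; rewrite -colE !mxE ord1 eqxx andbT.
    case: (eqVneq k i) => [->|ki]; first by rewrite (eqP ij) eqxx mulr1.
    rewrite mulr0; suff -> : (k == j :> nat) = false by [].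
    by apply/negbTE; rewrite -(eqP ij); apply: contra ki => /eqP /val_inj ->.
  case: (eqVneq d`_i 0) => [d0|dn0].
    rewrite -bcj zero ?dvdz0 //.
    by rewrite Mcj Dd d0 scale0r mulmx0.
  rewrite -bcj; apply: (H _ _ (L *m delta_mx i (0:'I_1)) dn0).
  by rewrite Mcj Dd scalemxAr.
have eb' : b' = b *m invmx R by [].
clearbody b'.
set y : 'rV[int]_n := \row_(i < n) \sum_(j < p | i == j :> nat) (b' 0%R j %/ (N * d`_i))%Z.
have yD : N *: (y *m D) = b'.
  apply/matrixP => i0 j; rewrite ord1 !mxE.
  case: (boolP [exists i : 'I_n, i == j :> nat]) => [/existsP [i ij]|].
    rewrite (bigD1 i) //= big1 ?addr0; last first.
      move=> k ki; rewrite !mxE.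
      suff -> : (k == j :> nat) = false by rewrite mulr0.
      by apply/negbTE; rewrite -(eqP ij); apply: contra ki => /eqP /val_inj ->.
    rewrite !mxE (bigD1 j) //= big1 ?addr0; last first.
      move=> k /andP [ik kj]; exfalso; move: kj; apply/negP/negPn.
      by apply/eqP/val_inj; rewrite /= -(eqP ik) (eqP ij).
    rewrite ij mulr1n mulrCA divzK //; exact: hd.
  rewrite negb_exists => /forallP hn.
  rewrite big1 ?mulr0; last by move=> k _; rewrite !mxE (negbTE (hn k)) mulr0.
  apply/esym; rewrite -bcj zero // Mcj.
  suff -> : D *m delta_mx j (0:'I_1) = 0 by rewrite mulmx0.
  apply/matrixP => k l; rewrite -colE !mxE (negbTE (hn k)) //.
exists (y *m invmx L).
rewrite defM !mulmxA -(mulmxA y) mulVmx // mulmx1 scalemxAl yD.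
by rewrite eb' -mulmxA mulVmx // mulmx1.
Qed.

Lemma scale_inj n (q : int) (x y : 'rV[int]_n) : q != 0 -> q *: x = q *: y -> x = y.
Proof.
move=> q0 H; apply/matrixP => i j; have := congr1 (fun M : 'rV[int]_n => M i j) H.
by rewrite !mxE => /(mulfI q0).
Qed.

Lemma scale_eq0 n (k : int) (e : 'rV[int]_n) : e != 0 -> k *: e = 0 -> k = 0.
Proof.
move=> e0 H; have [[i j] /= eij] : exists ij : 'I_1 * 'I_n, e ij.1 ij.2 != 0.
  apply/existsP; apply: contraNT e0; rewrite negb_exists => /forallP h.
  by apply/eqP/matrixP => i j; have := h (i, j); rewrite negbK mxE => /eqP.
have := congr1 (fun M : 'rV[int]_n => M i j) H; rewrite !mxE => /eqP.
by rewrite mulf_eq0 (negbTE eij) orbF => /eqP.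
Qed.

Lemma prim_div n (e y : 'rV[int]_n) (q a : int) :
  primitive e -> q != 0 -> q *: y = a *: e -> (q %| a)%Z.
Proof.
move=> [e0 pe] q0 H.
set g := gcdz q a.
have g0 : g != 0 by rewrite gcdz_eq0 negb_and q0.
have [u [v uv]] := Bezoutz q a.
have hq := divzK (dvdz_gcdl q a); have ha := divzK (dvdz_gcdr q a).
rewrite -/g in hq ha uv.
set q' := (q %/ g)%Z in hq; set a' := (a %/ g)%Z in ha.
have uv1 : u * q' + v * a' = 1.
  apply: (mulIf g0); by rewrite mul1r mulrDl -!mulrA hq ha uv.
have qy : q' *: y = a' *: e.
  apply: (scale_inj g0); rewrite !scalerA (mulrC g) (mulrC g) hq ha //.
have : e = q' *: (u *: e + v *: y).
  rewrite scalerDr !scalerA (mulrC q' v) -[(v * q') *: y]scalerA qy scalerA -scalerDl (mulrC q').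
  by rewrite -{1}(scale1r e) -uv1.
move=> /pe; rewrite -abszE => -[hq1].
rewrite dvdzE -hq abszM hq1 mul1n -dvdzE; exact: dvdz_gcdr.
Qed.

Section Bil.
Variables (n : nat) (B rho : 'M[int]_n).
Hypothesis Bsym : B^T = B.
Hypothesis rr : rho *m rho = 1%:M.
Hypothesis iso : rho *m B *m rho^T = B.

Lemma bilDl x y z : bil B (x + y) z = bil B x z + bil B y z.
Proof. by rewrite /bil !mulmxDl mxE. Qed.
Lemma bilZl k x z : bil B (k *: x) z = k * bil B x z.
Proof. by rewrite /bil -!scalemxAl mxE. Qed.
Lemma bilNl x z : bil B (- x) z = - bil B x z.
Proof. by rewrite -scaleN1r bilZl mulN1r. Qed.
Lemma bilBl x y z : bil B (x - y) z = bil B x z - bil B y z.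
Proof. by rewrite bilDl bilNl. Qed.
Lemma bilC x y : bil B x y = bil B y x.
Proof.
have h : (x *m B *m y^T)^T = y *m B *m x^T by rewrite !trmx_mul trmxK Bsym mulmxA.
by rewrite /bil -h [RHS]mxE.
Qed.
Lemma bilDr x y z : bil B z (x + y) = bil B z x + bil B z y.
Proof. by rewrite !(bilC z) bilDl. Qed.
Lemma bilZr k x z : bil B z (k *: x) = k * bil B z x.
Proof. by rewrite !(bilC z) bilZl. Qed.
Lemma bilNr x z : bil B z (- x) = - bil B z x.
Proof. by rewrite !(bilC z) bilNl. Qed.
Lemma bilBr x y z : bil B z (x - y) = bil B z x - bil B z y.
Proof. by rewrite !(bilC z) bilBl. Qed.
Lemma bil_rho x y : bil B (x *m rho) (y *m rho) = bil B x y.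
Proof.
rewrite /bil; have -> : x *m rho *m B *m (y *m rho)^T = x *m (rho *m B *m rho^T) *m y^T.
  by rewrite trmx_mul !mulmxA.
by rewrite iso.
Qed.
Lemma rho2 (x : 'rV[int]_n) : x *m rho *m rho = x.
Proof. by rewrite -mulmxA rr mulmx1. Qed.
Lemma bil_sw x y : bil B (x *m rho) y = bil B x (y *m rho).
Proof. by rewrite -{1}(rho2 y) bil_rho. Qed.
Lemma rhoB : rho *m B = B *m rho^T.
Proof. by rewrite -{1}iso !mulmxA rr mul1mx. Qed.
End Bil.
Lemma unit_abs1 (x : int) : `|x| = 1 -> x \is a GRing.unit.
Proof.
move=> H; apply/unitrPr; exists x.
have h : 0 <= x * x by rewrite -expr2 sqr_ge0.
by rewrite -(ger0_norm h) normrM H mulr1.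
Qed.
Lemma bil_col n (B : 'M[int]_n) x (c : 'cV[int]_n) : B \in unitmx ->
  (x *m c) 0 0 = bil B x ((invmx B *m c)^T).
Proof. by move=> uB; rewrite /bil trmxK -mulmxA (mulmxA B) mulmxV // mul1mx. Qed.

Section Help.
Variables (n : nat) (B rho : 'M[int]_n) (e : 'rV[int]_n).
Hypothesis Bsym : B^T = B.
Hypothesis rr : rho *m rho = 1%:M.
Hypothesis iso : rho *m B *m rho^T = B.
Hypothesis uB : B \in unitmx.
Hypothesis erho : e *m rho = - e.
Hypothesis e0 : e != 0.

Lemma xrho k (x : 'rV[int]_n) : x *m rho - x = k *: e -> x *m rho = x + k *: e.
Proof. by move=> <-; rewrite addrC subrK. Qed.

Lemma even_plus j (x : 'rV[int]_n) : x *m rho - x = (2*j) *: e -> eig_plus rho (x + j *: e).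
Proof.
move=> /xrho h; apply/eqP; rewrite mulmxDl -scalemxAl erho scalerN h -addrA.
congr (x + _); rewrite -scalerBl; congr (_ *: _); ring.
Qed.

Lemma diffB (x y : 'rV[int]_n) :
  (x - y) *m rho - (x - y) = (x *m rho - x) - (y *m rho - y).
Proof. rewrite mulmxBl; set a := x *m rho; set b := y *m rho.
by rewrite !opprB !addrA addrAC (addrAC a) addrAC.
Qed.

Lemma scale_eqk (a b : int) : a *: e = b *: e -> a = b.
Proof. by move=> h; apply/eqP; rewrite -subr_eq0; apply/eqP/(scale_eq0 e0); rewrite scalerBl h subrr. Qed.

Lemma solveB (w : 'rV[int]_n) q (ci : 'cV[int]_n) :
  B *m w^T = q *: ci -> w = q *: (invmx B *m ci)^T.
Proof.
move=> h; have : w^T = invmx B *m (q *: ci) by rewrite -h mulmxA mulVmx // mul1mx.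
by rewrite -scalemxAr => h2; rewrite -[w]trmxK h2 linearZ.
Qed.

Lemma Bt (u : 'rV[int]_n) : rho *m B *m u^T = B *m (u *m rho)^T.
Proof. by rewrite (rhoB rr iso) trmx_mul mulmxA. Qed.

Lemma cB (c : 'cV[int]_n) : c = B *m (invmx B *m c)^T^T.
Proof. by rewrite trmxK mulmxA mulmxV // mul1mx. Qed.
End Help.

Theorem lemma5p12 (B rho : 'M[int]_nK3) (e : 'rV[int]_nK3) :
  even_unimodular_lattice B 3 19 ->
  lattice_involution B rho ->
  hyperbolic_sublattice B (eig_plus rho) ->
  eig_minus rho e -> primitive e -> isotropic B e ->
  (* the projection e^perp -> Lambda_ias embeds S into Lambda_ias^+ *)
  ((forall s, eig_plus rho s -> eperp B e s /\ ias_plus rho e s) /\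
   (forall s1 s2, eig_plus rho s1 -> eig_plus rho s2 ->
      eq_mod_e e s1 s2 -> s1 = s2)) /\
  (* divisibility 1 : S = Lambda_ias^+ *)
  (divisibility_in_minus B rho e 1 ->
     forall x, eperp B e x -> ias_plus rho e x ->
       exists2 s, eig_plus rho s & eq_mod_e e x s) /\
  (* divisibility 2 *)
  (divisibility_in_minus B rho e 2 ->
     (* S has index 2 in Lambda_ias^+ *)
     (exists x0, [/\ eperp B e x0, ias_plus rho e x0,
        (forall s, eig_plus rho s -> ~ eq_mod_e e x0 s) &
        (forall x, eperp B e x -> ias_plus rho e x ->
           exists2 s, eig_plus rho s & (eq_mod_e e x s \/ eq_mod_e e x (x0 + s)))])
     /\
     (* S contains (1 + rho_ias) Lambda_ias *)
     (forall z, eperp B e z ->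
        exists2 s, eig_plus rho s & eq_mod_e e (z + z *m rho) s)
     /\
     (* (1 + rho_ias) Lambda_ias = 2 (Lambda_ias^+)^* inside Lambda_ias^+ (x) Q;
        an element of Lambda_ias^+ (x) Q is written v/m, v in Lambda_ias^+, m > 0 *)
     (forall (m : int) v, 0 < m -> eperp B e v -> ias_plus rho e v ->
        ((forall w, eperp B e w -> ias_plus rho e w -> (2 * m %| bil B v w)%Z)
         <-> exists2 z, eperp B e z & eq_mod_Qe e m v (z + z *m rho)))).
Proof.
move=> [Bsym [_ [Bdet _]]] [rr iso] _ em pe ie.
have uB : B \in unitmx by rewrite unitmxE unit_abs1.
have erho : e *m rho = - e by apply/eqP.
have e0 : e != 0 := pe.1.
have bC := bilC Bsym; have bDr := bilDr Bsym; have bZr := bilZr Bsym.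
have bNr := bilNr Bsym; have bBr := bilBr Bsym.
have bR := bil_rho iso; have bS := bil_sw rr iso.
have ee : bil B e e = 0 := ie.
split.
  split.
    move=> s /eqP sr; split.
      rewrite /eperp; apply/eqP.
      have := bR s e; rewrite sr erho bNr; lia.
    by exists 0; rewrite sr subrr scale0r.
  move=> s1 s2 /eqP p1 /eqP p2 [k hk].
  have h : (s1 - s2) *m rho = - (k *: e) by rewrite hk -scalemxAl erho scalerN.
  rewrite mulmxBl p1 p2 hk -scaleNr in h.
  have k0 : k = 0 by have := scale_eqk e0 h; lia.
  by apply/eqP; rewrite -subr_eq0 hk k0 scale0r.
split.
  move=> [_ [_ [t /eqP tm te]]] x xp [k hk].
  have h1 := bR x t; rewrite tm (xrho hk) bNr bilDl bilZl te mulr1 in h1.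
  exists (x + (- bil B x t) *: e).
    apply: even_plus => //; rewrite hk; congr (_ *: _); lia.
  by exists (bil B x t); rewrite opprD addrA subrr add0r scaleNr opprK.
move=> [_ [d2 _]].
have [x0 hx0] : exists x0 : 'rV[int]_nK3, 1 *: (x0 *m (1%:M - rho)) = e.
  apply: zsolve => // c q ci q0 hc.
  set u := (invmx B *m c)^T.
  have cu : c = B *m u^T := cB uB c.
  rewrite (@bil_col _ B) // -/u.
  have ht : B *m (u - u *m rho)^T = q *: ci.
    by rewrite -hc cu mulmxBl mul1mx mulmxA (Bt rr iso) linearB /= mulmxBr.
  have := solveB uB ht; set t' := (invmx B *m ci)^T => htq.
  have t'm : eig_minus rho t'.
    apply/eqP; apply: (scale_inj q0); rewrite scalemxAl -htq mulmxBl rho2 //.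
    by rewrite scalerN -htq opprB.
  have := d2 _ t'm; case/dvdzP => r hr.
  have h2 : bil B e (u - u *m rho) = bil B e u + bil B e u.
    by rewrite bBr -bS erho bilNl opprK.
  rewrite htq bZr hr in h2.
  rewrite mul1r; apply/dvdzP; exists r; nia.
rewrite scale1r mulmxBr mulmx1 in hx0.
have x0i : x0 *m rho - x0 = (-1) *: e by rewrite -hx0 scaleN1r opprB.
have x0e : bil B x0 e = 0.
  have := ee; rewrite -{1 2}hx0 !bilBl !bBr bR (bC (x0 *m rho)) -hx0 bBr; move: (bil B x0 x0) (bil B x0 (x0 *m rho)) => a b; lia.
split.
  exists x0; split => //.
  - by rewrite /eperp x0e.
  - by exists (-1).
  - move=> s /eqP sp [j hj].
    have h1 : (x0 - s) *m rho = - (j *: e) by rewrite hj -scalemxAl erho scalerN.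
    rewrite mulmxBl sp in h1.
    have : (-1) *: e = (- j - j) *: e.
      rewrite -x0i; have -> : x0 *m rho - x0 = (x0 *m rho - s) - (x0 - s).
        by rewrite opprB addrA subrK.
      by rewrite h1 hj scalerBl scaleNr.
    move/(scale_eqk e0); lia.
  move=> x xe [k hk].
  have [j [r [hkr hr]]] : exists j r, k = j * 2 + r /\ (r = 0 \/ r = 1).
    exists (k %/ 2)%Z, (k %% 2)%Z; split; first exact: divz_eq.
    have := modz_ge0 k (isT : (2:int) != 0); have := ltz_pmod k (isT : (0:int) < 2); lia.
  case: hr => hr.
    exists (x + j *: e); first by apply: even_plus => //; rewrite hk hkr hr mulrC addr0.
    by left; exists (- j); rewrite opprD addrA subrr add0r scaleNr.
  exists ((x - x0) + (j + 1) *: e).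
    apply: even_plus => //; rewrite diffB hk x0i -scalerBl; congr (_ *: _); lia.
  right; exists (- (j + 1)).
  by rewrite addrA opprD addrA (addrC x0) subrK subrr add0r scaleNr.
split.
  move=> z ze; exists (z + z *m rho); last by exists 0; rewrite subrr scale0r.
  by apply/eqP; rewrite mulmxDl rho2 // addrC.
move=> m v m0 /eqP ve [k hk]; split; last first.
  move=> [z /eqP ze [c c0 [a ha]]] w /eqP we [j hj].
  have h1 : bil B (c *: (v - m *: (z + z *m rho))) w = bil B (a *: e) w by rewrite ha.
  rewrite bilZl bilBl bilZl bilDl bS (xrho hj) bDr bZr bilZl in h1.
  rewrite (bC e) we ze in h1. move: h1.
  rewrite !mulr0 addr0 => /eqP; rewrite mulf_eq0 (negbTE c0) /= subr_eq0 => /eqP ->.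
  by apply/dvdzP; exists (bil B z w); ring.
move=> H.
have [z hz] : exists z : 'rV[int]_nK3, (2 * m) *: (z *m row_mx (1%:M + rho) (B *m e^T))
    = row_mx (v + v *m rho) (0 : 'rV[int]_1).
  apply: zsolve; first by rewrite mulf_neq0 // gt_eqF.
  move=> c q ci q0.
  rewrite -[c]vsubmxK mul_row_col mul_row_col mul0mx addr0.
  set c1 := usubmx c; set c0 := dsubmx c.
  rewrite [c0]mx11_scalar mul_mx_scalar.
  set a := c0 0 0.
  set u := (invmx B *m c1)^T. have cu := cB uB c1. rewrite cu -/u.
  move=> hc.
  have hw : B *m (u + u *m rho + a *: e)^T = q *: ci.
    rewrite -hc !linearD /= linearZ /= mulmxDl mul1mx scalemxAr (mulmxA rho) (Bt rr iso).
    done.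
  have := solveB uB hw; set w' := (invmx B *m ci)^T => hww.
  have w'e : bil B w' e = 0.
    have : bil B (u + u *m rho + a *: e) e = 0.
      by rewrite !bilDl bS erho bNr bilZl ee mulr0 addr0 subrr.
    by rewrite hww bilZl => /eqP; rewrite mulf_eq0 (negbTE q0) => /eqP.
  have w'i : ias_plus rho e w'.
    set p := u + u *m rho in hww; have pr : p *m rho = p by rewrite mulmxDl rho2 // addrC.
    have h : q *: (w' *m rho - w') = (- (a + a)) *: e.
      rewrite scalerBr scalemxAl -hww mulmxDl pr -scalemxAl erho.
      by rewrite opprD addrA (addrAC p) subrr add0r scalerN -!scaleNr -scalerDl opprD.
    have := prim_div pe q0 h; case/dvdzP => r hr; exists r.
    by apply: (scale_inj q0); rewrite h hr scalerA mulrC.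
  have := H w' (introT eqP w'e) w'i.
  rewrite (@bil_col _ B) // mulKmx // -/u.
  have : bil B v (u + u *m rho + a *: e) = q * bil B v w' by rewrite hww bZr.
  rewrite bDr bZr ve mulr0 addr0 bilDl bS -bDr trmxK => ->.
  by rewrite (mulrC q) dvdz_mul2r.
rewrite mul_mx_row scale_row_mx in hz; case/eq_row_mx: hz => h1 h2.
exists z.
  rewrite /eperp /bil -mulmxA; have := congr1 (fun M : 'rV[int]_1 => M 0 0) h2.
  by rewrite !mxE => /eqP; rewrite mulf_eq0 mulf_eq0 gt_eqF //= (gt_eqF m0).
exists 2 => //; exists (- k).
rewrite mulmxDr mulmx1 in h1.
rewrite scalerBr scalerA h1 (xrho hk) scaler_nat mulr2n.
by rewrite opprD addrA addrK opprD addrA subrr add0r scaleNr.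
Qed.
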